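(* Let $P$ be a probability distribution on an input space $\mathcal{X}$ with ground-truth labelling $G^*:\mathcal{X}\to[K]$, and suppose $P$ satisfies $(1/2,b)$-multiplicative-expansion on $\mathcal{X}$ for some $b>1$. Then for every $\rho>0$, $P$ satisfies $\left(\frac{\rho}{b-1},\rho\right)$-constant-expansion.
   Context: Let $\mathcal{T}_{wa}$ be a set of (weak) augmentation maps on $\mathcal{X}$ and $r\ge 0$. For $x\in\mathcal{X}$, $\mathcal{A}(x):=\{x' : \exists T\in\mathcal{T}_{wa}\text{ with }\|x'-T(x)\|\le r\}$; the neighborhood of $x$ is $\mathcal{N}(x):=\{x' : \mathcal{A}(x)\cap\mathcal{A}(x')\neq\emptyset\}$, and for $S\subseteq\mathcal{X}$, $\mathcal{N}(S):=\bigcup_{x\in S}\mathcal{N}(x)$. For $i\in[K]$, $\mathcal{Q}_i:=\{x: G^*(x)=i\}$, and $P_i$ denotes the conditional distribution of $P$ on $\mathcal{Q}_i$, i.e. $P_i(S)=P(S\cap\mathcal{Q}_i)/P(\mathcal{Q}_i)$. The same-class neighborhood is $\mathcal{N}^*(S):=\bigcup_{i\in[K]}\big(\mathcal{N}(S\cap\mathcal{Q}_i)\cap\mathcal{Q}_i\big)$. $P$ satisfies $(a,b)$-multiplicative-expansion if for every $i\in[K]$ and every $S\subseteq\mathcal{Q}_i$ with $P_i(S)\le a$, one has $P_i(\mathcal{N}(S))\ge\min\{bP_i(S),1\}$. $P$ satisfies $(c,\rho)$-constant-expansion if for every $S\subseteq\mathcal{X}$ with $P(S)\ge c$ and $P(S\cap\mathcal{Q}_i)\le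 P(\mathcal{Q}_i)/2$ for all $i\in[K]$, one has $P(\mathcal{N}^*(S)\setminus S)\ge\min\{\rho,P(S)\}$. *)

(* Defs.v *)
From HB Require Import structures.
From mathcomp Require Import all_boot all_order all_algebra.
From mathcomp Require Import all_classical all_reals.
From mathcomp Require Import topology normedtype.
Set Implicit Arguments. Unset Strict Implicit. Unset Printing Implicit Defensive.
Import Order.TTheory GRing.Theory Num.Theory.
Import numFieldNormedType.Exports.
Local Open Scope classical_set_scope.
Local Open Scope ring_scope.

Section Expansion.
Variables (R : realType) (X : normedModType R).

(* A probability distribution on X, defined on all subsets (as in the paper,
   where P(S) is taken for arbitrary S ⊆ X): nonnegative, total mass 1,
   finitely additive. *)
Definition is_prob (P : set X -> R) : Prop :=
  [/\ P setT = 1,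
      (forall A, 0 <= P A) &
      (forall A B, A `&` B = set0 -> P (A `|` B) = P A + P B)].

Definition aug_set (Twa : set (X -> X)) (r : R) (x : X) : set X :=
  [set x' | exists2 T, Twa T & `|x' - T x| <= r].

Definition nbhd (Twa : set (X -> X)) (r : R) (x : X) : set X :=
  [set x' | aug_set Twa r x `&` aug_set Twa r x' !=set0].

Definition nbhdS (Twa : set (X -> X)) (r : R) (S : set X) : set X :=
  \bigcup_(x in S) nbhd Twa r x.

Variable (K : nat).

Definition Qcls (G : X -> 'I_K) (i : 'I_K) : set X := [set x | G x = i].

Definition Pcond (P : set X -> R) (G : X -> 'I_K) (i : 'I_K) (S : set X) : R :=
  P (S `&` Qcls G i) / P (Qcls G i).

Definition nbhd_star (Twa : set (X -> X)) (r : R) (G : X -> 'I_K) (S : set X)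
  : set X :=
  \bigcup_(i in [set: 'I_K]) (nbhdS Twa r (S `&` Qcls G i) `&` Qcls G i).

Definition mult_expansion (P : set X -> R) (G : X -> 'I_K)
  (Twa : set (X -> X)) (r : R) (a b : R) : Prop :=
  forall (i : 'I_K) (S : set X), S `<=` Qcls G i ->
    Pcond P G i S <= a ->
    Pcond P G i (nbhdS Twa r S) >= Num.min (b * Pcond P G i S) 1.

Definition const_expansion (P : set X -> R) (G : X -> 'I_K)
  (Twa : set (X -> X)) (r : R) (c rho : R) : Prop :=
  forall S : set X, P S >= c ->
    (forall i : 'I_K, P (S `&` Qcls G i) <= P (Qcls G i) / 2) ->
    P (nbhd_star Twa r G S `\` S) >= Num.min rho (P S).

End Expansion.

(* Main.v *)
Require Import Defs.
From HB Require Import structures.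
From mathcomp Require Import all_boot all_order all_algebra.
From mathcomp Require Import all_classical all_reals.
From mathcomp Require Import topology normedtype.
From mathcomp Require Import lra.
Import Order.TTheory GRing.Theory Num.Theory.
Import numFieldNormedType.Exports.
Local Open Scope classical_set_scope.
Local Open Scope ring_scope.

Set Implicit Arguments.
Section Aux.
Variables (R : realType) (X : normedModType R) (P : set X -> R).
Hypothesis hP : is_prob P.

Lemma P0 : P set0 = 0.
Proof.
case: hP => _ _ hadd.
have := hadd set0 set0 (setI0 _); rewrite setU0 => h.
lra.
Qed.

Lemma Pdecomp A B : P A = P (A `&` B) + P (A `\` B).
Proof.
case: hP => _ _ hadd.
rewrite -hadd; last first.
  by apply/seteqP; split => x //= [[_ h1] [_ h2]].
congr P; apply/seteqP; split => x /=.
  by move=> Ax; case: (pselect (B x)) => h; [left|right].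
by case=> -[].
Qed.

Lemma Pmono A B : A `<=` B -> P A <= P B.
Proof.
move=> AB; rewrite (Pdecomp B A).
have -> : B `&` A = A by apply/seteqP; split => x /=; [case| move=> h; split=>//; exact: AB].
case: hP => _ hnn _; by rewrite lerDl.
Qed.

Variables (K : nat) (G : X -> 'I_K).

Lemma Psum_seq A (s : seq 'I_K) : uniq s ->
  P (A `&` [set x | G x \in s]) = \sum_(i <- s) P (A `&` Qcls G i).
Proof.
elim: s => [|i s IH] /=.
  move=> _; rewrite big_nil -P0; congr P; apply/seteqP; split => x /=; first by case=> _; rewrite in_nil.
  by [].
move=> /andP [nis us]; rewrite big_cons -IH //.
rewrite (Pdecomp _ (Qcls G i)); congr (_ + _); congr P; apply/seteqP; split => x /=.
- by case=> -[Ax _] Gi.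
- move=> [Ax Gi]; split=> //; split=> //; by rewrite inE Gi eqxx.
- case=> -[Ax]; rewrite inE => /orP [/eqP Gi nQ|h _]; [by exfalso; apply: nQ | by split].
- move=> [Ax h]; split; first by split=> //; rewrite inE h orbT.
  by move=> Gi; move: h; rewrite Gi (negbTE nis).
Qed.

Lemma Psum A : P A = \sum_(i <- enum 'I_K) P (A `&` Qcls G i).
Proof.
rewrite -Psum_seq ?enum_uniq //; congr P; apply/seteqP; split => x /=.
  by move=> Ax; split=> //; rewrite mem_enum.
by case.
Qed.

End Aux.

Theorem lemma1 (R : realType) (X : normedModType R) (K : nat)
  (P : set X -> R) (G : X -> 'I_K) (Twa : set (X -> X)) (r b : R) :
  is_prob P -> 0 <= r -> 1 < b ->
  mult_expansion P G Twa r (1 / 2) b ->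
  forall rho : R, 0 < rho ->
    const_expansion P G Twa r (rho / (b - 1)) rho.
Proof.
move=> hP r0 b1 hM rho rho0 S PS hS.
have hnn := (let: And3 _ h _ := hP in h).
set m := Num.min (b - 1) 1.
have m0 : 0 <= m by rewrite le_min; apply/andP; split; lra.
have claim : forall i, m * P (S `&` Qcls G i) <=
    P ((nbhd_star Twa r G S `\` S) `&` Qcls G i).
  move=> i.
  set s := P (S `&` Qcls G i); set q := P (Qcls G i).
  set Y := nbhdS Twa r (S `&` Qcls G i) `&` Qcls G i.
  have -> : (nbhd_star Twa r G S `\` S) `&` Qcls G i = Y `\` (S `&` Qcls G i).
    apply/seteqP; split => x /=.
    - case=> -[[j _ [hN Gj]] nS] Gi; split; last by case.
      by split=> //; move: hN; rewrite /Qcls /= in Gj Gi; rewrite -Gi -Gj.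
    - case=> -[hN Gi] nSQ; split; last by [].
      split; last by move=> Sx; apply: nSQ.
      by exists i.
  have hYd := Pdecomp hP Y (S `&` Qcls G i).
  have hYS : P (Y `&` (S `&` Qcls G i)) <= s by apply: Pmono => // x [].
  have s0 : 0 <= s by exact: hnn.
  have q0 : 0 <= q by exact: hnn.
  have Y0 : 0 <= P (Y `\` (S `&` Qcls G i)) by exact: hnn.
  have hsq : s <= q / 2 by exact: hS.
  have [qz|qpos] := eqVneq q 0.
    have -> : s = 0 by move: hsq; rewrite qz mul0r => h; apply/eqP; rewrite eq_le h s0.
    by rewrite mulr0.
  have qp : 0 < q by rewrite lt_def qpos q0.
  have hyp := hM i (S `&` Qcls G i) (fun x => @proj2 _ _).
  rewrite /Pcond -setIA setIid in hyp.
  have hle : s / q <= 1 / 2.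
    by rewrite ler_pdivrMr // mulrC mul1r.
  have := hyp hle; rewrite -/s -/q -/Y ge_min => /orP [h|h].
  - have h' : b * s <= P Y.
      by move: h; rewrite -(ler_pM2r qp) mulrA !divfK ?qpos.
    have : m * s <= (b - 1) * s by apply: ler_wpM2r => //; rewrite ge_min lexx.
    lra.
  - have h' : q <= P Y by move: h; rewrite -(ler_pM2r qp) mul1r divfK ?qpos.
    have : m * s <= 1 * s by apply: ler_wpM2r => //; rewrite ge_min lexx orbT.
    lra.
have hsum : m * P S <= P (nbhd_star Twa r G S `\` S).
  rewrite (Psum hP G S) (Psum hP G (nbhd_star Twa r G S `\` S)) mulr_sumr.
  by apply: ler_sum => i _; exact: claim.
apply: le_trans hsum.
have PS0 : 0 <= P S by exact: hnn.
rewrite /m; case: (leP (b - 1) 1) => hb.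
- rewrite ge_min; apply/orP; left.
  move: PS; rewrite ler_pdivrMr; last lra.
  by rewrite mulrC.
- by rewrite mul1r ge_min lexx orbT.
Qed.
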